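(* Let $S$ be a set of $n$ points in $\mathbb{R}^d$, where $d$ is a constant, with Euclidean distance; let $\varepsilon>0$ be a real constant, let $\theta$ be a constant with $0<\theta<\pi/4$ such that $1/(\cos\theta-\sin\theta)\le 1+\varepsilon$, let $\mathcal{C}$ be a cone collection as in the context consisting of $O(1/\theta^{d-1})$ cones, and let $f\ge0$ be an integer. Then each of the graphs $\mathrm{Yao}(\theta,2f+1)$ and $\Theta(\theta,2f+1)$ is an $f$-faulty-degree $(1+\varepsilon)$-spanner for $S$ with $O(fn)$ edges.
   Context: $K_S$ is the complete graph on $S$ with edge weights the Euclidean distances; all graphs have Euclidean edge weights; $\delta_X$ is shortest-path distance in $X$; $X\setminus F$ is $X$ with the edges of $F$ removed. A graph $G=(S,E)$ is an $f$-faulty-degree $t$-spanner for $S$ if for every $F\subseteq E$ with $(S,F)$ of maximum degree at most $f$ and all $p,q\in S$, $\delta_{G\setminus F}(p,q)\le t\,\delta_{K_S\setminus F}(p,q)$. $\mathcal{C}$ is a finite collection of cones with apex at the origin covering $\mathbb{R}^d$, each of angular diameter at most $\theta$, i.e. $\max\{\angle(0x,0y):x,y\in C\setminus\{0\}\}\le\theta$. For each $C\in\mathcal{C}$ fix a ray $\ell_C$ from the origin contained in $C$. For $p\in S$: $C+p=\{x+p:x\in C\}$, $\ell_C+p$ is the translate of $\ell_C$ emanating from $p$, and $S_{p,C}=(C+p)\cap(S\setminus\{p\})$. The graph $\mathrm{Yao}(\theta,k)$ has vertex set $S$ and, for each $p\in S$ and $C\in\mathcal{C}$, an edge from $p$ to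 each of the $\min(k,|S_{p,C}|)$ points of $S_{p,C}$ closest to $p$ in Euclidean distance (ties broken arbitrarily). The graph $\Theta(\theta,k)$ has vertex set $S$ and, for each $p\in S$ and $C\in\mathcal{C}$, an edge from $p$ to each of $\min(k,|S_{p,C}|)$ points of $S_{p,C}$ whose orthogonal projections onto $\ell_C+p$ are closest to $p$ (ties broken arbitrarily). *)

(* Defs.v *)
From HB Require Import structures.
From mathcomp Require Import all_boot all_order all_algebra.
From mathcomp Require Import all_classical all_reals all_analysis.
Set Implicit Arguments. Unset Strict Implicit. Unset Printing Implicit Defensive.
Import Order.TTheory GRing.Theory Num.Theory.
Local Open Scope classical_set_scope.
Local Open Scope ring_scope.

Section Defs.
Variable R : realType.
Variable d : nat.

Definition dotv (u v : 'rV[R]_d) : R := \sum_(i < d) u ord0 i * v ord0 i.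
Definition enorm (u : 'rV[R]_d) : R := Num.sqrt (dotv u u).

Definition vangle (u v : 'rV[R]_d) : R := acos (dotv u v / (enorm u * enorm v)).

(* A finite collection of m cones C_c with apex 0, covering R^d, each of angular
   diameter at most theta, with a fixed ray l_c = {t *: ray c | t >= 0} inside C_c. *)
Definition cone_collection (theta : R) (m : nat)
  (cone : 'I_m -> set 'rV[R]_d) (ray : 'I_m -> 'rV[R]_d) : Prop :=
  (forall c x t, cone c x -> 0 < t -> cone c (t *: x)) /\
  (forall c x y, cone c x -> cone c y -> x != 0 -> y != 0 -> vangle x y <= theta) /\
  (forall x, exists c, cone c x) /\
  (forall c, ray c != 0 /\ forall t, 0 <= t -> cone c (t *: ray c)).

Variable n : nat.
Variable pt : 'I_n -> 'rV[R]_d.   (* S = the image of the injective map pt *)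

Definition edist (i j : 'I_n) : R := enorm (pt i - pt j).

(* S_{p,C} = (C + p) ∩ (S \ {p}) *)
Definition Spc (C : set 'rV[R]_d) (i : 'I_n) : {set 'I_n} :=
  [set j | (j != i) && `[< C (pt j - pt i) >]].

(* distance from pt i to the orthogonal projection of pt j onto the line of ray u from pt i *)
Definition projdist (u : 'rV[R]_d) (i j : 'I_n) : R :=
  `|dotv (pt j - pt i) u| / enorm u.

(* Graphs on S: symmetric relations on the vertex indices.
   Yao(theta,k): for some admissible tie-breaking N. *)
Definition is_Yao m (cone : 'I_m -> set 'rV[R]_d) (k : nat) (G : rel 'I_n) : Prop :=
  exists N : 'I_n -> 'I_m -> {set 'I_n},
    (forall i c, N i c \subset Spc (cone c) i) /\
    (forall i c, #|N i c| = minn k #|Spc (cone c) i|) /\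
    (forall i c j j', j \in N i c -> j' \in Spc (cone c) i :\: N i c ->
        edist i j <= edist i j') /\
    (forall i j, G i j = [exists c, (j \in N i c) || (i \in N j c)]).

Definition is_Theta m (cone : 'I_m -> set 'rV[R]_d) (ray : 'I_m -> 'rV[R]_d)
    (k : nat) (G : rel 'I_n) : Prop :=
  exists N : 'I_n -> 'I_m -> {set 'I_n},
    (forall i c, N i c \subset Spc (cone c) i) /\
    (forall i c, #|N i c| = minn k #|Spc (cone c) i|) /\
    (forall i c j j', j \in N i c -> j' \in Spc (cone c) i :\: N i c ->
        projdist (ray c) i j <= projdist (ray c) i j') /\
    (forall i j, G i j = [exists c, (j \in N i c) || (i \in N j c)]).

Definition walk_len (i : 'I_n) (s : seq 'I_n) : R := \sum_(x <- pairmap edist i s) x.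

(* shortest-path distance in the graph with edge relation E (+oo if no path) *)
Definition spdist (E : rel 'I_n) (i j : 'I_n) : \bar R :=
  ereal_inf [set (walk_len i s)%:E | s in [set s | path E i s && (last i s == j)]].

Definition KminusF (F : rel 'I_n) : rel 'I_n := fun i j => (i != j) && ~~ F i j.
Definition GminusF (G F : rel 'I_n) : rel 'I_n := fun i j => G i j && ~~ F i j.

Definition faulty_degree_spanner (f : nat) (t : R) (G : rel 'I_n) : Prop :=
  forall F : rel 'I_n,
    symmetric F -> subrel F G -> (forall i, #|[set j | F i j]| <= f)%N ->
    forall i j, (spdist (GminusF G F) i j <= t%:E * spdist (KminusF F) i j)%E.

Definition nedges (G : rel 'I_n) : nat :=
  #|[set e : 'I_n * 'I_n | (e.1 < e.2)%N && G e.1 e.2]|.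

End Defs.

(* Main.v *)
Require Import Defs.
From HB Require Import structures.
From mathcomp Require Import all_boot all_order all_algebra.
From mathcomp Require Import all_classical all_reals all_analysis.
From mathcomp Require Import ring lra zify.
Import Order.TTheory GRing.Theory Num.Theory.
Set Implicit Arguments. Unset Strict Implicit.
Local Open Scope ring_scope.

Lemma dotvC (R : realType) (d : nat) (u v : 'rV[R]_d) : dotv u v = dotv v u.
Proof. by apply: eq_bigr => i _; rewrite mulrC. Qed.

Lemma dotvDl (R : realType) (d : nat) (u v w : 'rV[R]_d) :
  dotv (u + v) w = dotv u w + dotv v w.
Proof. by rewrite /dotv -big_split; apply: eq_bigr => i _; rewrite mxE mulrDl. Qed.

Lemma dotvZl (R : realType) (d : nat) (a : R) (u w : 'rV[R]_d) :
  dotv (a *: u) w = a * dotv u w.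
Proof. by rewrite /dotv mulr_sumr; apply: eq_bigr => i _; rewrite mxE mulrA. Qed.

Lemma dotvNl (R : realType) (d : nat) (u w : 'rV[R]_d) :
  dotv (- u) w = - dotv u w.
Proof. by rewrite -scaleN1r dotvZl mulN1r. Qed.

Lemma dotvDr (R : realType) (d : nat) (u v w : 'rV[R]_d) :
  dotv w (u + v) = dotv w u + dotv w v.
Proof. by rewrite dotvC dotvDl !(dotvC w). Qed.

Lemma dotvZr (R : realType) (d : nat) (a : R) (u w : 'rV[R]_d) :
  dotv w (a *: u) = a * dotv w u.
Proof. by rewrite dotvC dotvZl dotvC. Qed.

Lemma dotvNr (R : realType) (d : nat) (u w : 'rV[R]_d) :
  dotv w (- u) = - dotv w u.
Proof. by rewrite dotvC dotvNl dotvC. Qed.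

Lemma dotv_ge0 (R : realType) (d : nat) (u : 'rV[R]_d) : 0 <= dotv u u.
Proof. by apply: sumr_ge0 => i _; rewrite -expr2 sqr_ge0. Qed.

Lemma dotv_eq0 (R : realType) (d : nat) (u : 'rV[R]_d) : dotv u u = 0 -> u = 0.
Proof.
move=> /eqP; rewrite psumr_eq0 => [H|i _]; last by rewrite -expr2 sqr_ge0.
apply/rowP => i; rewrite mxE; move/allP: H => /(_ i (mem_index_enum _)).
by rewrite -expr2 sqrf_eq0 => /eqP.
Qed.

Lemma enorm_ge0 (R : realType) (d : nat) (u : 'rV[R]_d) : 0 <= enorm u.
Proof. exact: sqrtr_ge0. Qed.

Lemma enorm_sq (R : realType) (d : nat) (u : 'rV[R]_d) : enorm u ^+ 2 = dotv u u.
Proof. by rewrite /enorm sqr_sqrtr // dotv_ge0. Qed.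

Lemma enorm_gt0 (R : realType) (d : nat) (u : 'rV[R]_d) : u != 0 -> 0 < enorm u.
Proof.
move=> H; rewrite lt_neqAle enorm_ge0 andbT; apply/eqP => E.
move: H; rewrite (dotv_eq0 (u := u)) ?eqxx //.
by rewrite -enorm_sq -E expr2 mulr0.
Qed.

Lemma enormN (R : realType) (d : nat) (u : 'rV[R]_d) : enorm (- u) = enorm u.
Proof. by rewrite /enorm dotvNl dotvNr opprK. Qed.

Lemma dotv0l (R : realType) (d : nat) (u : 'rV[R]_d) : dotv 0 u = 0.
Proof. by rewrite -(scale0r (0 : 'rV[R]_d)) dotvZl mul0r. Qed.

Lemma dotv_expand (R : realType) (d : nat) (a b : R) (u v : 'rV[R]_d) :
  dotv (a *: u + b *: v) (a *: u + b *: v) =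
  a ^+ 2 * enorm u ^+ 2 + 2 * a * b * dotv u v + b ^+ 2 * enorm v ^+ 2.
Proof.
rewrite !enorm_sq dotvDl !dotvDr !dotvZl !dotvZr (dotvC v u). ring.
Qed.

Lemma CS (R : realType) (d : nat) (u v : 'rV[R]_d) :
  `|dotv u v| <= enorm u * enorm v.
Proof.
have [->|u0] := eqVneq u 0; first by rewrite dotv0l normr0 mulr_ge0 ?enorm_ge0.
have [->|v0] := eqVneq v 0; first by rewrite dotvC dotv0l normr0 mulr_ge0 ?enorm_ge0.
have a0 := enorm_gt0 u0; have b0 := enorm_gt0 v0.
have H1 := dotv_ge0 (enorm v *: u + (- enorm u) *: v).
have H2 := dotv_ge0 (enorm v *: u + (enorm u) *: v).
rewrite dotv_expand in H1; rewrite dotv_expand in H2.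
have P : 0 < enorm u * enorm v by rewrite mulr_gt0.
rewrite ler_norml; apply/andP; split; nra.
Qed.

Lemma trig_facts (R : realType) (theta : R) : 0 < theta -> theta < pi / 4 ->
  [/\ 0 < sin theta, sin theta < cos theta, cos theta <= 1 &
      cos theta ^+ 2 + sin theta ^+ 2 = 1].
Proof.
move=> t0 t4.
have pi0 := pi_gt0 R.
have e2 : pi / 2 = (pi / 4) * 2 :> R by field.
have e4 : 0 < pi / 4 :> R by rewrite divr_gt0.
have hs : 0 < sin theta by apply: sin_gt0_pihalf; apply/andP; split=> //; lra.
have hc : 0 < cos theta by apply: cos_gt0_pihalf; apply/andP; split; lra.
have h2 : 0 < cos (theta *+ 2).
  apply: cos_gt0_pihalf.
  have e5 : theta *+ 2 = theta * 2 by rewrite mulr_natr.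
  have e6 : pi / (1 + 1) = (pi / 4) * 2 :> R by field.
  rewrite e5 e6; apply/andP; split; lra.
rewrite cos_mulr2n in h2.
have E := cos2Dsin2 theta.
rewrite mulr2n in h2.
split=> //.
nra.
Qed.

Lemma angle_cos (R : realType) (d : nat) (theta : R) (x y : 'rV[R]_d) :
  0 <= theta <= pi -> x != 0 -> y != 0 -> vangle x y <= theta ->
  cos theta * (enorm x * enorm y) <= dotv x y.
Proof.
move=> /andP[t0 tp] x0 y0 H.
have P : 0 < enorm x * enorm y by rewrite mulr_gt0 ?enorm_gt0.
set z := dotv x y / (enorm x * enorm y).
have hz : -1 <= z <= 1.
  have := CS x y; rewrite ler_norml => /andP[h1 h2].
  rewrite /z ler_pdivlMr // ler_pdivrMr //; apply/andP; split; lra.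
have ca := acos_def hz; case: ca => /andP[a0 ap] cz.
have : cos theta <= z.
  rewrite leNgt; apply/negP => lt.
  rewrite -cz in lt.
  have : theta < acos z.
    have Ha : acos z \in `[0, pi] by rewrite in_itv /= a0 ap.
    have Ht : theta \in `[0, pi] by rewrite in_itv /= t0 tp.
    by rewrite -(ltr_cos Ht Ha).
  move: H; rewrite /vangle -/z; lra.
by rewrite /z ler_pdivlMr.
Qed.

Lemma geo (R : realType) (d : nat) (theta : R) (u v : 'rV[R]_d) :
  0 < sin theta -> sin theta < cos theta -> cos theta <= 1 ->
  cos theta ^+ 2 + sin theta ^+ 2 = 1 ->
  cos theta * (enorm u * enorm v) <= dotv u v ->
  enorm v * cos theta <= enorm u ->
  enorm (u - v) <= enorm u - (cos theta - sin theta) * enorm v.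
Proof.
move=> s0 sc c1 E H1 H2.
have hu := enorm_ge0 u; have hv := enorm_ge0 v; have hw := enorm_ge0 (u - v).
have e : u - v = 1 *: u + (-1) *: v by rewrite scale1r scaleN1r.
have Q := enorm_sq (u - v).
rewrite e dotv_expand -e in Q.
set a := enorm u in Q H1 H2 hu *; set b := enorm v in Q H1 H2 hv *.
set w := enorm (u - v) in Q hw *.
set C := cos theta in sc c1 E H1 H2 *; set S := sin theta in s0 sc E *.
have h3 : 0 <= a - (C - S) * b by nra.
have h5 : 0 <= S * b * (a - C * b) by rewrite !mulr_ge0 // ?subr_ge0 ?(ltW s0) // mulrC.
have Q' : w ^+ 2 = a ^+ 2 - 2 * dotv u v + b ^+ 2 by rewrite Q; ring.
have h4 : w ^+ 2 <= (a - (C - S) * b) ^+ 2 by nra.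
nra.
Qed.

Definition W (R : realType) (d n : nat) (pt : 'I_n -> 'rV[R]_d) (E : rel 'I_n)
  (i j : 'I_n) (L : R) : Prop :=
  exists s, (path E i s && (last i s == j)) /\ walk_len pt i s <= L.

Lemma walk_len_nil (R : realType) (d n : nat) (pt : 'I_n -> 'rV[R]_d) i :
  walk_len pt i [::] = 0.
Proof. by rewrite /walk_len big_nil. Qed.

Lemma walk_len_cons (R : realType) (d n : nat) (pt : 'I_n -> 'rV[R]_d) i x s :
  walk_len pt i (x :: s) = Defs.edist pt i x + walk_len pt x s.
Proof. by rewrite /walk_len /= big_cons. Qed.

Lemma walk_len_cat (R : realType) (d n : nat) (pt : 'I_n -> 'rV[R]_d) i s1 s2 :
  walk_len pt i (s1 ++ s2) = walk_len pt i s1 + walk_len pt (last i s1) s2.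
Proof. by rewrite /walk_len pairmap_cat big_cat. Qed.

Lemma W_le (R : realType) (d n : nat) (pt : 'I_n -> 'rV[R]_d) E i j a b :
  W pt E i j a -> a <= b -> W pt E i j b.
Proof. by move=> [s [H1 H2]] ab; exists s; split=> //; apply: le_trans ab. Qed.

Lemma W_refl (R : realType) (d n : nat) (pt : 'I_n -> 'rV[R]_d) E i :
  W pt E i i 0.
Proof. by exists [::]; rewrite walk_len_nil /= eqxx. Qed.

Lemma W_edge (R : realType) (d n : nat) (pt : 'I_n -> 'rV[R]_d) (E : rel 'I_n) i j :
  E i j -> W pt E i j (Defs.edist pt i j).
Proof. by move=> H; exists [:: j]; rewrite walk_len_cons walk_len_nil addr0 /= H eqxx. Qed.

Lemma W_cat (R : realType) (d n : nat) (pt : 'I_n -> 'rV[R]_d) E i j k a b :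
  W pt E i j a -> W pt E j k b -> W pt E i k (a + b).
Proof.
move=> [s1 [/andP[p1 /eqP l1] w1]] [s2 [/andP[p2 /eqP l2] w2]].
exists (s1 ++ s2); rewrite cat_path last_cat l1 p1 p2 l2 eqxx walk_len_cat l1.
by split=> //; apply: lerD.
Qed.

Lemma W_spdist (R : realType) (d n : nat) (pt : 'I_n -> 'rV[R]_d) E i j L :
  W pt E i j L -> (spdist pt E i j <= L%:E)%E.
Proof.
move=> [s [H1 H2]]; apply: ge_ereal_inf; exists (walk_len pt i s)%:E.
  by exists s.
by rewrite lee_fin.
Qed.

Lemma ed_ge0 (R : realType) (d n : nat) (pt : 'I_n -> 'rV[R]_d) i j :
  0 <= Defs.edist pt i j.
Proof. exact: enorm_ge0. Qed.

Lemma walk_len_ge0 (R : realType) (d n : nat) (pt : 'I_n -> 'rV[R]_d) i s :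
  0 <= walk_len pt i s.
Proof.
elim: s i => [|x s IH] i; first by rewrite walk_len_nil.
by rewrite walk_len_cons addr_ge0 ?ed_ge0.
Qed.

Lemma edist_enorm (R : realType) (d n : nat) (pt : 'I_n -> 'rV[R]_d) i j :
  Defs.edist pt i j = enorm (pt j - pt i).
Proof. by rewrite /Defs.edist -enormN opprB. Qed.

Lemma minn_lt_aux (a b : nat) : (minn a b < b)%N -> minn a b = a.
Proof. lia. Qed.

Lemma count_aux (b nN i a1 a2 f : nat) : b = (nN - i)%N -> (i <= a1 + a2)%N ->
  (a1 <= f)%N -> (a2 <= f)%N -> nN = (2 * f + 1)%N -> (0 < b)%N.
Proof. lia. Qed.

Lemma key (R : realType) (d n : nat) (pt : 'I_n -> 'rV[R]_d) (m : nat)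
  (cone : 'I_m -> set 'rV[R]_d) (theta eps : R) (f : nat) (G F : rel 'I_n)
  (N : 'I_n -> 'I_m -> {set 'I_n}) :
  injective pt -> 0 < theta -> theta < pi / 4 ->
  1 / (cos theta - sin theta) <= 1 + eps -> 0 < eps ->
  (forall c x y, cone c x -> cone c y -> x != 0 -> y != 0 -> vangle x y <= theta) ->
  (forall x, exists c, cone c x) ->
  (forall i c, N i c \subset Spc pt (cone c) i) ->
  (forall i c, #|N i c| = minn (2 * f + 1) #|Spc pt (cone c) i|) ->
  (forall p c r q, r \in N p c -> q \in Spc pt (cone c) p :\: N p c ->
     enorm (pt r - pt p) * cos theta <= enorm (pt q - pt p)) ->
  (forall i j, G i j = [exists c, (j \in N i c) || (i \in N j c)]) ->
  symmetric F -> (forall i, (#|[set j | F i j]| <= f)%N) ->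
  forall p q, p != q -> ~~ F p q ->
    W pt (GminusF G F) p q ((1 + eps) * Defs.edist pt p q).
Proof.
move=> inj t0 t4 hc e0 Hang Hcov HNS HNc Hcl HG Fs Fd.
have [s0 sc c1 E] := trig_facts t0 t4.
have pi0 := pi_gt0 R.
have hpi : 0 <= theta <= pi.
  apply/andP; split; first exact: ltW.
  have e4 : pi = (pi / 4) * 4 :> R by field.
  have e5 : 0 < pi / 4 :> R by rewrite divr_gt0.
  lra.
set t := 1 + eps.
have tc : 1 <= t * (cos theta - sin theta).
  by rewrite -ler_pdivrMr ?subr_gt0.
have t1 : 1 <= t by rewrite /t; lra.
pose rk (p q : 'I_n) := #|[set e : 'I_n * 'I_n | Defs.edist pt e.1 e.2 < Defs.edist pt p q]|.
suff : forall k p q, (rk p q < k)%N -> p != q -> ~~ F p q ->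
    W pt (GminusF G F) p q (t * Defs.edist pt p q).
  by move=> H p q; apply: (H (rk p q).+1).
elim=> [//|k IH] p q hk pq Fpq.
have [c hc0] := Hcov (pt q - pt p).
have hqS : q \in Spc pt (cone c) p.
  by rewrite inE eq_sym pq /=; apply/asboolP.
case hqN : (q \in N p c).
  apply: W_le; first apply: W_edge.
    by rewrite /GminusF HG Fpq andbT; apply/existsP; exists c; rewrite hqN.
  by rewrite -{1}(mul1r (Defs.edist pt p q)) ler_wpM2r // ed_ge0.
have hqD : q \in Spc pt (cone c) p :\: N p c by rewrite inE hqN.
have hcard : #|N p c| = (2 * f + 1)%N.
  have : (#|N p c| < #|Spc pt (cone c) p|)%N.
    apply: proper_card; apply/properP; split; first exact: HNS.
    by exists q => //; rewrite hqN.
  by rewrite HNc; apply: minn_lt_aux.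
set A1 := [set j | F p j]; set A2 := [set j | F q j].
have A2E : [set j | F j q] = A2 by apply/setP => j; rewrite !inE Fs.
set B := N p c :\: (A1 :|: [set j | F j q]).
have : (0 < #|B|)%N.
  have h1 := cardsD (N p c) (A1 :|: [set j | F j q]).
  have h2 : (#|N p c :&: (A1 :|: [set j | F j q])| <= #|A1| + #|A2|)%N.
    apply: leq_trans (subset_leq_card (subsetIr _ _)) _.
    by rewrite A2E; apply: (leq_card_setU _ _).1.
  have h3 := Fd p; have h4 := Fd q.
  rewrite -/B in h1; rewrite -/A1 in h3; rewrite -/A2 in h4.
  exact: (count_aux h1 h2 h3 h4 hcard).
rewrite card_gt0 => /set0Pn [r]; rewrite /B !inE negb_or => /andP[/andP[Fpr Frq] hrN].
have hrS := fintype.subsetP (HNS p c) r hrN.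
move: (hrS); rewrite inE => /andP[rp /asboolP hrc].
have rq : r != q by apply: contraTneq hrN => ->; rewrite hqN.
set u := pt q - pt p; set v := pt r - pt p.
have u0 : u != 0 by rewrite subr_eq0; apply: contra pq => /eqP /inj ->.
have v0 : v != 0 by rewrite subr_eq0; apply: contra rp => /eqP /inj ->.
have Hcos := angle_cos hpi u0 v0 (Hang c u v hc0 hrc u0 v0).
have Hc := Hcl p c r q hrN hqD.
have Hgeo := geo s0 sc c1 E Hcos Hc.
have euv : u - v = pt q - pt r by rewrite /u /v opprB addrA subrK.
rewrite euv -edist_enorm -/v -/u in Hgeo.
have dpq : Defs.edist pt p q = enorm u by rewrite edist_enorm.
have dpr : Defs.edist pt p r = enorm v by rewrite edist_enorm.
have vpos := enorm_gt0 v0.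
have hlt : Defs.edist pt r q < Defs.edist pt p q.
  rewrite dpq; apply: (le_lt_trans Hgeo).
  rewrite ltrBlDr ltrDl; apply: mulr_gt0 => //; rewrite subr_gt0; exact: sc.
have IHrq : W pt (GminusF G F) r q (t * Defs.edist pt r q).
  apply: IH => //.
  rewrite ltnS in hk; apply: leq_trans _ hk; apply: proper_card; apply/properP; split.
    apply/fintype.subsetP => e; rewrite !inE => h; exact: lt_trans h hlt.
  by exists (r, q); rewrite !inE /= ?hlt ?ltxx.
have Wpr : W pt (GminusF G F) p r (Defs.edist pt p r).
  apply: W_edge; rewrite /GminusF HG Fpr andbT; apply/existsP; exists c.
  by rewrite hrN.
apply: W_le (W_cat Wpr IHrq) _.
rewrite dpq dpr.
have hrq0 := ed_ge0 pt r q.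
set C := cos theta - sin theta in tc Hgeo *.
have t0' : 0 <= t by lra.
have h1 := ler_wpM2l t0' Hgeo.
have h2 := ler_wpM2r (ltW vpos) tc.
have e : t * (enorm u - C * enorm v) = t * enorm u - (t * C) * enorm v by ring.
rewrite e in h1; rewrite mul1r in h2; lra.
Qed.

Lemma card_bigU (T I : finType) (A : I -> {set T}) :
  (#|\bigcup_(x : I) A x| <= \sum_(x : I) #|A x|)%N.
Proof.
elim/big_rec2: _ => [|x s U _ IH]; first by rewrite cards0. apply: leq_trans (leq_card_setU _ _).1 _.
by rewrite leq_add2l.
Qed.

Lemma edges_bound (n m k : nat) (G : rel 'I_n) (N : 'I_n -> 'I_m -> {set 'I_n}) :
  (forall i c, #|N i c| <= k)%N ->
  (forall i j, G i j = [exists c, (j \in N i c) || (i \in N j c)]) ->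
  (nedges G <= 2 * (n * m * k))%N.
Proof.
move=> HN HG.
pose U1 := \bigcup_(x : 'I_n * 'I_m) [set (x.1, j) | j in N x.1 x.2].
pose U2 := \bigcup_(x : 'I_n * 'I_m) [set (j, x.1) | j in N x.1 x.2].
have bnd : forall (g : 'I_n -> 'I_n -> 'I_n * 'I_n),
    (#|\bigcup_(x : 'I_n * 'I_m) [set g x.1 j | j in N x.1 x.2]| <= n * m * k)%N.
  move=> g; apply: leq_trans (card_bigU _) _.
  have h : (\sum_(x : 'I_n * 'I_m) #|[set g x.1 j | j in N x.1 x.2]| <=
           \sum_(x : 'I_n * 'I_m) k)%N.
    by apply: leq_sum => x _; apply: leq_trans (leq_imset_card _ _) (HN _ _).
  apply: leq_trans h _.
  by rewrite sum_nat_const card_prod !card_ord.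
have sub : [set e : 'I_n * 'I_n | (e.1 < e.2)%N && G e.1 e.2] \subset U1 :|: U2.
  apply/fintype.subsetP => [[a b]]; rewrite !inE /= HG => /andP[_ /existsP[c /orP[h|h]]].
    apply/orP; left; apply/bigcupP; exists (a, c) => //.
    by apply/imsetP; exists b.
  apply/orP; right; apply/bigcupP; exists (b, c) => //.
  by apply/imsetP; exists a.
rewrite /nedges.
have -> : #|[set e : 'I_n * 'I_n | (e.1 < e.2)%N && G e.1 e.2]%classic| =
          #|[set e : 'I_n * 'I_n | (e.1 < e.2)%N && G e.1 e.2]|.
  apply: eq_card => e; rewrite inE; apply/idP/idP => [/set_mem //|h]; exact: mem_set.
apply: (leq_trans (subset_leq_card sub)).
apply: leq_trans (leq_card_setU _ _).1 _.
have := bnd (fun a b => (a, b)); have := bnd (fun a b => (b, a)).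
rewrite -/U1 -/U2; lia.
Qed.

Lemma spanner (R : realType) (d n : nat) (pt : 'I_n -> 'rV[R]_d) (m : nat)
  (cone : 'I_m -> set 'rV[R]_d) (theta eps : R) (f : nat) (G : rel 'I_n)
  (N : 'I_n -> 'I_m -> {set 'I_n}) :
  injective pt -> 0 < theta -> theta < pi / 4 ->
  1 / (cos theta - sin theta) <= 1 + eps -> 0 < eps ->
  (forall c x y, cone c x -> cone c y -> x != 0 -> y != 0 -> vangle x y <= theta) ->
  (forall x, exists c, cone c x) ->
  (forall i c, N i c \subset Spc pt (cone c) i) ->
  (forall i c, #|N i c| = minn (2 * f + 1) #|Spc pt (cone c) i|) ->
  (forall p c r q, r \in N p c -> q \in Spc pt (cone c) p :\: N p c ->
     enorm (pt r - pt p) * cos theta <= enorm (pt q - pt p)) ->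
  (forall i j, G i j = [exists c, (j \in N i c) || (i \in N j c)]) ->
  faulty_degree_spanner pt f (1 + eps) G.
Proof.
move=> inj t0 t4 hc e0 Hang Hcov HNS HNc Hcl HG F Fs _ Fd i j.
have tp : 0 < 1 + eps by lra.
have Fd' : forall i0, (#|[set j0 | F i0 j0]| <= f)%N.
  move=> i0; apply: leq_trans (Fd i0); rewrite leq_eqVlt; apply/orP; left.
  apply/eqP; apply: eq_card => j0; rewrite inE.
  by apply/idP/idP => [h|/set_mem //]; exact: mem_set.
have Hw : forall s i, path (KminusF F) i s ->
    W pt (GminusF G F) i (last i s) ((1 + eps) * walk_len pt i s).
  elim=> [|x s IH] i0 /=.
    by move=> _; rewrite walk_len_nil mulr0; exact: W_refl.
  rewrite /KminusF => /andP[/andP[ix Fix] hp].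
  have K1 := key inj t0 t4 hc e0 Hang Hcov HNS HNc Hcl HG Fs Fd' ix Fix.
  by rewrite walk_len_cons mulrDr; apply: W_cat K1 (IH x hp).
rewrite -lee_pdivrMl //; apply: le_ereal_inf_tmp => z [s /= /andP[hp /eqP hl] <-].
rewrite lee_pdivrMl // -EFinM; apply: W_spdist; rewrite -hl; exact: Hw.
Qed.

Lemma real_aux1 (R : realType) (a b c : R) : 0 <= a -> a <= b -> 0 <= c -> c <= 1 -> a * c <= b.
Proof. move=> *; nra. Qed.

Lemma real_aux2 (R : realType) (V U W D D' c : R) : 0 < W -> 0 <= V ->
  c * (V * W) <= D -> `|D| / W <= `|D'| / W -> `|D'| <= U * W -> V * c <= U.
Proof.
move=> W0 V0 h1 h2 h3.
rewrite ler_pM2r ?invr_gt0 // in h2.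
have h4 := ler_norm D.
have : V * c * W <= U * W by nra.
by rewrite ler_pM2r.
Qed.

Lemma nat_aux (e n m f : nat) : (e <= 2 * (n * m * (2 * f + 1)))%N ->
  (e <= 4 * (m * f.+1 * n))%N.
Proof. lia. Qed.

Lemma real_aux3 (R : realType) (a b c x : R) : 0 <= b -> 0 <= c -> a <= x ->
  4 * a * b * c <= 4 * x * b * c.
Proof.
move=> b0 c0 ax; have h : 0 <= (x - a) * b * c by rewrite !mulr_ge0 // subr_ge0.
nra.
Qed.

Unset Implicit Arguments. Set Strict Implicit.

Theorem theorem4 (R : realType) (d : nat) (eps theta K : R) :
  0 < eps -> 0 < theta -> theta < pi / 4 ->
  1 / (cos theta - sin theta) <= 1 + eps ->
  exists cst : R,
  forall (n : nat) (pt : 'I_n -> 'rV[R]_d) (m : nat)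
         (cone : 'I_m -> classical_sets.set 'rV[R]_d) (ray : 'I_m -> 'rV[R]_d)
         (f : nat) (G : rel 'I_n),
    injective pt ->
    cone_collection theta cone ray ->
    m%:R <= K / theta ^+ d.-1 ->
    is_Yao pt cone (2 * f + 1) G \/ is_Theta pt cone ray (2 * f + 1) G ->
    faulty_degree_spanner pt f (1 + eps) G /\
    (nedges G)%:R <= cst * (f.+1)%:R * n%:R.
Proof.
move=> e0 t0 t4 hc.
exists (4 * (K / theta ^+ d.-1)) => n pt m cone ray f G inj [Hsc [Hang [Hcov Hray]]] hm HYT.
have [s0 sc c1 E] := trig_facts t0 t4.
have pi0 := pi_gt0 R.
have hpi : 0 <= theta <= pi.
  apply/andP; split; first exact: ltW.
  have e4 : pi = (pi / 4) * 4 :> R by field.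
  have e5 : 0 < pi / 4 :> R by rewrite divr_gt0.
  lra.
have cpos : 0 <= cos theta by apply: ltW; apply: lt_trans sc.
have Hedges : forall N : 'I_n -> 'I_m -> {set 'I_n},
    (forall i c, #|N i c| = minn (2 * f + 1) #|Spc pt (cone c) i|) ->
    (forall i j, G i j = [exists c, (j \in N i c) || (i \in N j c)]) ->
    (nedges G)%:R <= 4 * (K / theta ^+ d.-1) * (f.+1)%:R * n%:R.
  move=> N H2 H4.
  have HN : forall i c, (#|N i c| <= 2 * f + 1)%N by move=> i c; rewrite H2 geq_minl.
  have hb := @edges_bound n m (2 * f + 1) G N HN H4.
  have hb2 := nat_aux hb.
  apply: le_trans (_ : (4 * (m * f.+1 * n))%:R <= _).
    by rewrite ler_nat.
  rewrite !natrM mulrA [X in X <= _](_ : _ = 4 * m%:R * (f.+1)%:R * n%:R); last first.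
    by rewrite !mulrA.
  by apply: real_aux3.
case: HYT => [[N [H1 [H2 [H3 H4]]]] | [N [H1 [H2 [H3 H4]]]]]; split.
- apply: (spanner inj t0 t4 hc e0 Hang Hcov H1 H2 _ H4).
  move=> p c r q hr hq; have h := H3 p c r q hr hq.
  rewrite !edist_enorm in h.
  by apply: real_aux1 => //; exact: enorm_ge0.
- exact: Hedges H2 H4.
- apply: (spanner inj t0 t4 hc e0 Hang Hcov H1 H2 _ H4).
  move=> p c r q hr hq; have h := H3 p c r q hr hq.
  have hrS := fintype.subsetP (H1 p c) r hr.
  move: (hrS); rewrite inE => /andP[rp /asboolP hrc].
  have v0 : pt r - pt p != 0 by rewrite subr_eq0; apply: contra rp => /eqP /inj ->.
  have [w0 hw] := Hray c.
  have hwc : cone c (ray c) by have := hw 1 ler01; rewrite scale1r.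
  have Hcos := angle_cos hpi v0 w0 (Hang c _ _ hrc hwc v0 w0).
  rewrite /Defs.projdist in h.
  exact: (real_aux2 (enorm_gt0 w0) (enorm_ge0 _) Hcos h (CS _ _)).
- exact: Hedges H2 H4.
Qed.
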